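(* Let $(X,\|\cdot\|_X)$ be a Banach space and $p\in[1,\infty)$; fix $m,n\in\mathbb N$. Then for every $f:\mathbb Z_{8m}^n\to X$ and $j\in\{1,\ldots,n\}$, $$\sum_{x\in\mathbb Z_{8m}^n}\|f(x)-T_jf(x)\|_X^p\le\frac{2^p}{2^n}\sum_{\varepsilon\in\{-1,1\}^n}\sum_{x\in\mathbb Z_{8m}^n}\|f(x+\varepsilon)-f(x)\|_X^p.$$ Moreover, for every $x\in\mathbb Z_{8m}^n$, $$\sum_{\varepsilon\in\{-1,1\}^n}\Big\|\sum_{j=1}^n\varepsilon_j\big[T_jf(x+2e_j)-T_jf(x-2e_j)\big]\Big\|_X^p\le(2K_p(X))^p\sum_{\varepsilon\in\{-1,1\}^n}\|f(x+2\varepsilon)-f(x)\|_X^p\le(4K_p(X))^p\sum_{\varepsilon\in\{-1,1\}^n}\|f(x+\varepsilon)-f(x)\|_X^p.$$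
   Context: $\mathbb Z_{8m}^n=(\mathbb Z/8m\mathbb Z)^n$, integer vectors added modulo $8m$; $e_j$ standard basis; $\varepsilon_T=\sum_{i\in T}\varepsilon_ie_i$. $T_jf(x)=\frac1{2^n}\sum_{\varepsilon\in\{-1,1\}^n}f\big(x+2\varepsilon_{\{1,\ldots,n\}\setminus\{j\}}\big)$. $K_p(X)\in[1,\infty]$ is the $K$-convexity constant: the least $K$ such that for all $N$ and $h:\{-1,1\}^N\to X$, $\sum_\varepsilon\|\mathrm{Rad}(h)(\varepsilon)\|^p\le K^p\sum_\varepsilon\|h(\varepsilon)\|^p$, where $\mathrm{Rad}(h)(\varepsilon)=\sum_{j=1}^N\big(2^{-N}\sum_\delta h(\delta)\delta_j\big)\varepsilon_j$. *)

(* Defs.v *)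
From HB Require Import structures.
From mathcomp Require Import all_boot all_order all_algebra.
From Stdlib Require Import Reals.

Set Implicit Arguments. Unset Strict Implicit. Unset Printing Implicit Defensive.

Record BanachSpace := {
  bs_car :> Type;
  bs_zero : bs_car;
  bs_add : bs_car -> bs_car -> bs_car;
  bs_opp : bs_car -> bs_car;
  bs_scal : R -> bs_car -> bs_car;
  bs_norm : bs_car -> R;
  bs_addA : forall x y z, bs_add x (bs_add y z) = bs_add (bs_add x y) z;
  bs_addC : forall x y, bs_add x y = bs_add y x;
  bs_add0 : forall x, bs_add bs_zero x = x;
  bs_addN : forall x, bs_add (bs_opp x) x = bs_zero;
  bs_scal1 : forall x, bs_scal 1%R x = x;
  bs_scalA : forall a b x, bs_scal a (bs_scal b x) = bs_scal (Rmult a b) x;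
  bs_scalDr : forall a x y, bs_scal a (bs_add x y) = bs_add (bs_scal a x) (bs_scal a y);
  bs_scalDl : forall a b x, bs_scal (Rplus a b) x = bs_add (bs_scal a x) (bs_scal b x);
  bs_norm_eq0 : forall x, bs_norm x = 0%R -> x = bs_zero;
  bs_normZ : forall a x, bs_norm (bs_scal a x) = Rmult (Rabs a) (bs_norm x);
  bs_normD : forall x y, Rle (bs_norm (bs_add x y)) (Rplus (bs_norm x) (bs_norm y));
  bs_complete : forall u : nat -> bs_car,
    (forall eps, Rlt 0 eps -> exists N, forall k l, (N <= k)%nat -> (N <= l)%nat ->
        Rlt (bs_norm (bs_add (u k) (bs_opp (u l)))) eps) ->
    exists L, forall eps, Rlt 0 eps -> exists N, forall k, (N <= k)%nat ->
        Rlt (bs_norm (bs_add (u k) (bs_opp L))) eps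
}.

Arguments bs_zero {_}. Arguments bs_add {_}. Arguments bs_opp {_}.
Arguments bs_scal {_}. Arguments bs_norm {_}.

Definition bs_sub (X : BanachSpace) (x y : X) : X := bs_add x (bs_opp y).

Definition rpow (a p : R) : R :=
  if Rle_dec a 0 then 0%R else Rpower a p.

Definition rsum (T : finType) (F : T -> R) : R := \big[Rplus/0%R]_(t : T) F t.
Definition xsum (X : BanachSpace) (T : finType) (F : T -> X) : X :=
  \big[@bs_add X/bs_zero]_(t : T) F t.

(* {-1,1}^N, encoded as boolean functions: true <-> +1, false <-> -1 *)
Definition signs (N : nat) := {ffun 'I_N -> bool}.
Definition sgnR (b : bool) : R := if b then 1%R else (-1)%R.

Section ZVec.
Local Open Scope ring_scope.
Definition pt (m n : nat) := 'rV['Z_(8 * m)]_n.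

Definition ptadd (m n : nat) (x y : pt m n) : pt m n := GRing.add x y.
Definition ptsub (m n : nat) (x y : pt m n) : pt m n := GRing.add x (GRing.opp y).

Definition epsv (m n : nat) (c : nat) (e : signs n) : pt m n :=
  \row_(i < n) (if e i then (c%:R)
                else GRing.opp ((c%:R))).

Definition epsv_but (m n : nat) (j : 'I_n) (e : signs n) : pt m n :=
  \row_(i < n) (if i == j then 0
                else if e i then (2%:R)
                else GRing.opp ((2%:R))).

Definition two_e (m n : nat) (j : 'I_n) : pt m n :=
  \row_(i < n) (if i == j then (2%:R) else 0).

End ZVec.

Definition Tj (X : BanachSpace) (m n : nat) (j : 'I_n) (f : pt m n -> X)
    (x : pt m n) : X :=
  bs_scal (Rinv (pow 2 n)) (xsum (fun e : signs n => f (ptadd x (epsv_but m j e)))).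

Definition Rad (X : BanachSpace) (N : nat) (h : signs N -> X) (e : signs N) : X :=
  xsum (fun j : 'I_N =>
    bs_scal (sgnR (e j))
      (bs_scal (Rinv (pow 2 N)) (xsum (fun d : signs N => bs_scal (sgnR (d j)) (h d))))).

(* K is an admissible K-convexity constant for X (exponent p); K_p(X) is the
   least such K (or infinity if none exists). *)
Definition Kconv_const (X : BanachSpace) (p K : R) : Prop :=
  forall (N : nat) (h : signs N -> X),
    Rle (rsum (fun e : signs N => rpow (bs_norm (Rad h e)) p))
        (Rmult (rpow K p) (rsum (fun e : signs N => rpow (bs_norm (h e)) p))).

(* Main.v *)
Require Import Defs.
From HB Require Import structures.
From mathcomp Require Import all_boot all_order all_algebra.
From Stdlib Require Import Reals.
From mathcomp Require Import boolp classical_sets reals interval_inference exp convex hoelder Rstruct Rstruct_topology.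
From mathcomp Require Import ring lra.
Set Implicit Arguments. Unset Strict Implicit. Unset Printing Implicit Defensive.
Import Order.TTheory GRing.Theory Num.Theory.
Local Open Scope ring_scope.
Lemma rpowE (a p : R) : 0 <= a -> 0 < p -> rpow a p = powR a p.
Proof.
move=> a0 p0; rewrite /rpow; case: Rle_dec => h.
  have e : a = 0 by apply/eqP; rewrite eq_le a0 andbT; apply/RleP.
  by subst a; rewrite powR0 // gt_eqF.
have an : a != 0.
  by apply/eqP => e; apply: h; rewrite e; apply: Rle_refl.
by rewrite /powR (negbTE an) /Rpower RexpE RlnE.
Qed.
Section J.
Variable p : R.
Hypothesis p1 : 1 <= p.

Lemma conv2 (t a b : R) : 0 <= t -> t <= 1 -> 0 <= a -> 0 <= b ->
  powR (t * a + (1 - t) * b) p <= t * powR a p + (1 - t) * powR b p.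
Proof.
move=> t0 t1 a0 b0.
have := convex_powR p1 (Itv01 t0 t1) (x:=a) (y:=b).
rewrite !inE /= !in_itv /= !andbT => /(_ a0 b0).
by rewrite !convRE.
Qed.

Lemma jensen_seq (s : seq R) : all (fun x => 0 <= x) s -> (0 < size s)%nat ->
  powR ((size s)%:R^-1 * \sum_(x <- s) x) p <= (size s)%:R^-1 * \sum_(x <- s) powR x p.
Proof.
elim: s => [//|a s IH] /andP[a0 s0] _.
case: s IH s0 => [|b s] IH s0.
  by rewrite /= !big_cons !big_nil !addr0 invr1 !mul1r.
have {IH} := IH s0 isT.
set k := size (b :: s).
have kp : 0 < (k%:R : R) by rewrite ltr0n.
have S0 : 0 <= \sum_(x <- b :: s) x.
  by rewrite big_seq sumr_ge0 // => x; apply: (allP (s0 : all (fun x => 0 <= x) (b :: s))).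
have P0 : 0 <= \sum_(x <- b :: s) powR x p.
  by rewrite sumr_ge0 // => x _; apply: powR_ge0.
move=> IH; rewrite [in X in X <= _]big_cons [in X in _ <= X]big_cons.
set t := ((k.+1)%:R : R)^-1.
have t0 : 0 <= t by rewrite invr_ge0 ler0n.
have t1 : t <= 1 by rewrite invf_le1 ?ler1n ?ltr0n.
have e1 : t * (a + \sum_(x <- b :: s) x) = t * a + (1 - t) * (k%:R^-1 * \sum_(x <- b :: s) x).
  rewrite /t -addn1 natrD; field; rewrite ?gt_eqF //; lra.
rewrite e1; apply: le_trans.
  apply: conv2 => //; by rewrite mulr_ge0 // invr_ge0 ltW.
have e2 : t * (powR a p + \sum_(x <- b :: s) powR x p) = t * powR a p + (1 - t) * (k%:R^-1 * \sum_(x <- b :: s) powR x p).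
  rewrite /t -addn1 natrD; field; rewrite ?gt_eqF //; lra.
rewrite e2 lerD2l; apply: ler_wpM2l => //; lra.
Qed.

Lemma jensen_fin (T : finType) (a : T -> R) : (forall t, 0 <= a t) -> (0 < #|T|)%nat ->
  powR (#|T|%:R^-1 * \sum_t a t) p <= #|T|%:R^-1 * \sum_t powR (a t) p.
Proof.
move=> a0 T0.
have := @jensen_seq (map a (enum T)).
rewrite size_map -cardE !big_map -enumT !big_enum /=; apply => //.
by apply/allP => x /mapP [t _ ->].
Qed.
End J.
Section Inst.
Variable X : BanachSpace.
HB.instance Definition _ := gen_eqMixin (bs_car X).
HB.instance Definition _ := gen_choiceMixin (bs_car X).
HB.instance Definition _ := GRing.isZmodule.Build (bs_car X)
  (@bs_addA X) (@bs_addC X) (@bs_add0 X) (@bs_addN X).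
HB.instance Definition _ := GRing.Zmodule_isLmodule.Build R (bs_car X)
  (@bs_scalA X) (@bs_scal1 X) (@bs_scalDr X) (fun v a b => @bs_scalDl X a b v).
End Inst.

Lemma powR_mono (p a b : R) : 0 <= p -> 0 <= a -> a <= b -> powR a p <= powR b p.
Proof.
move=> p0 a0 ab; apply: (ge0_ler_powR p0) => //; rewrite nnegrE //.
exact: le_trans ab.
Qed.

Lemma two_pt (p a b : R) : 1 <= p -> 0 <= a -> 0 <= b ->
  powR (a + b) p <= powR 2 p / 2 * (powR a p + powR b p).
Proof.
move=> p1 a0 b0.
have h := @conv2 p p1 (2^-1) a b.
have e : 1 - 2^-1 = 2^-1 :> R by field.
rewrite e in h.
have h2 : 2^-1 * a + 2^-1 * b = (a + b) * 2^-1 by ring.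
rewrite h2 in h; rewrite powRM in h; [|exact: addr_ge0|by rewrite invr_ge0].
have c0 : 0 < powR 2 p by apply: powR_gt0.
have e2 : powR 2 p * powR (2^-1) p = 1.
  by rewrite -powRM ?invr_ge0 // mulfV // powR1.
have := h ltac:(by rewrite invr_ge0) ltac:(by rewrite invf_le1 // ler1n) a0 b0.
move=> /(ler_wpM2l (ltW c0)) H.
rewrite mulrCA e2 mulr1 in H.
apply: (le_trans H); rewrite le_eqVlt; apply/orP; left; apply/eqP; ring.
Qed.

Section Banach.
Variable X : BanachSpace.
Local Notation nrm := (@bs_norm X).

Lemma nrmZ a (x : X) : nrm (a *: x) = `|a| * nrm x.
Proof. by rewrite -RabsE; apply: bs_normZ. Qed.

Lemma nrm0 : nrm 0 = 0.
Proof. by rewrite -(scale0r (0 : X)) nrmZ normr0 mul0r. Qed.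

Lemma nrmN (x : X) : nrm (- x) = nrm x.
Proof. by rewrite -scaleN1r nrmZ normrN normr1 mul1r. Qed.

Lemma nrmD (x y : X) : nrm (x + y) <= nrm x + nrm y.
Proof. by apply/RleP; apply: bs_normD. Qed.

Lemma nrm_ge0 (x : X) : 0 <= nrm x.
Proof.
have := nrmD x (- x); rewrite subrr nrm0 nrmN => h.
by rewrite -(@pmulr_rge0 _ 2) // mulr2n mulrDl mul1r.
Qed.

Lemma nrmB (x y : X) : nrm (x - y) = nrm (y - x).
Proof. by rewrite -nrmN opprB. Qed.

Lemma nrm_sum (T : finType) (F : T -> X) : nrm (\sum_t F t) <= \sum_t nrm (F t).
Proof.
apply: (big_ind2 (fun v r => nrm v <= r)); first by rewrite nrm0.
  by move=> x1 x2 y1 y2 h1 h2; apply: le_trans (nrmD _ _) _; apply: lerD.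
by [].
Qed.
End Banach.

Lemma R2E : IZR 2 = 2%:R.
Proof. by rewrite IZRposE INRE. Qed.
Lemma R4E : IZR 4 = 4%:R.
Proof. by rewrite IZRposE INRE. Qed.

Definition setj n (e : signs n) (j : 'I_n) (b : bool) : signs n :=
  [ffun i => if i == j then b else e i].
Definition flipj n (e : signs n) (j : 'I_n) : signs n :=
  [ffun i => if i == j then ~~ e i else e i].

Arguments setj {n}. Arguments flipj {n}.

Lemma flipjK n (j : 'I_n) : involutive (fun e : signs n => flipj e j).
Proof.
move=> e; apply/ffunP => i; rewrite !ffunE.
by case: eqP => //= _; rewrite negbK.
Qed.

Lemma sum_pair_flip (V : nmodType) n (j : 'I_n) (H : signs n -> V) :
  \sum_e (H e + H (flipj e j)) = (\sum_e H e) *+ 2.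
Proof.
rewrite big_split /= mulr2n; congr (_ + _).
by rewrite [RHS](reindex_inj (can_inj (flipjK j))).
Qed.

Lemma setj_same n (e : signs n) j : setj e j (e j) = e.
Proof. by apply/ffunP => i; rewrite !ffunE; case: eqP => // ->. Qed.
Lemma setj_flip n (e : signs n) j : setj e j (~~ e j) = flipj e j.
Proof. by apply/ffunP => i; rewrite !ffunE; case: eqP => // ->. Qed.
Lemma flipj_j n (e : signs n) j : flipj e j j = ~~ e j.
Proof. by rewrite ffunE eqxx. Qed.

Lemma sum_set (V : nmodType) n (j : 'I_n) (G : signs n -> V) :
  \sum_e (G (setj e j true) + G (setj e j false)) = (\sum_e G e) *+ 2.
Proof.
rewrite -(sum_pair_flip j); apply: eq_bigr => e _.
case E: (e j).
  have h1 : setj e j true = e by rewrite -E setj_same.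
  have h2 : setj e j false = flipj e j by rewrite -setj_flip E.
  by rewrite h1 h2.
have h1 : setj e j false = e by rewrite -E setj_same.
have h2 : setj e j true = flipj e j by rewrite -setj_flip E.
by rewrite h1 h2 addrC.
Qed.

Lemma sum_set_sub (V : lmodType R) n (j : 'I_n) (G : signs n -> V) :
  \sum_e (G (setj e j true) - G (setj e j false)) =
  (\sum_(e : signs n) sgnR (e j) *: G e) *+ 2.
Proof.
rewrite -(sum_pair_flip j); apply: eq_bigr => e _.
rewrite flipj_j; case E: (e j) => /=.
  have h1 : setj e j true = e by rewrite -E setj_same.
  have h2 : setj e j false = flipj e j by rewrite -setj_flip E.
  by rewrite h1 h2 scale1r scaleN1r.
have h1 : setj e j false = e by rewrite -E setj_same.
have h2 : setj e j true = flipj e j by rewrite -setj_flip E.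
by rewrite h1 h2 scale1r scaleN1r addrC.
Qed.

Lemma sgn_sum0 (V : lmodType R) n (j : 'I_n) (v : V) :
  \sum_(e : signs n) sgnR (e j) *: v = 0.
Proof.
have := sum_set_sub j (fun _ => v).
rewrite big1 /=; last by move=> e _; rewrite subrr.
move=> /esym H.
by rewrite -[LHS]scale1r -(@mulVf _ 2) ?pnatr_eq0 // -scalerA scaler_nat H scaler0.
Qed.

Section Points.
Variables m n : nat.
Local Notation pt := (pt m n).

Lemma P1 (j : 'I_n) e : epsv_but m j e = epsv m 1 (setj e j true) + epsv m 1 (setj e j false) :> pt.
Proof.
apply/rowP => i; rewrite !mxE !ffunE; case: eqP => _ /=; first by rewrite subrr.
by case: (e i) => /=; rewrite ?(opprD) -?opprD -mulr2n.
Qed.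

Lemma P2 (j : 'I_n) e (x : pt) :
  ptadd x (two_e m j) + epsv_but m j e = x + epsv m 2 (setj e j true).
Proof.
apply/rowP => i; rewrite /ptadd !mxE !ffunE; case: eqP => _ /=; first by rewrite addr0.
by rewrite addr0.
Qed.

Lemma P3 (j : 'I_n) e (x : pt) :
  ptsub x (two_e m j) + epsv_but m j e = x + epsv m 2 (setj e j false).
Proof.
apply/rowP => i; rewrite /ptadd /ptsub !mxE !ffunE; case: eqP => _ /=; first by rewrite addr0.
by rewrite oppr0 addr0.
Qed.

Lemma P4 e : epsv m 2 e = epsv m 1 e + epsv m 1 e :> pt.
Proof.
by apply/rowP => i; rewrite !mxE; case: (e i) => /=; rewrite -?opprD -mulr2n.
Qed.
End Points.

Lemma rsumE (T : finType) (F : T -> R) : rsum F = \sum_t F t.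
Proof. by []. Qed.

Section Main.
Variables (X : BanachSpace) (p : R) (m n : nat) (f : pt m n -> X).
Hypothesis p1 : 1 <= p.
Local Notation nrm := (@bs_norm X).

Lemma p0 : 0 < p. Proof. exact: lt_le_trans p1. Qed.

Definition D (a : pt m n) := \sum_(x : pt m n) powR (nrm (f (x + a) - f x)) p.

Lemma L2 a b : \sum_(x : pt m n) powR (nrm (f (x + (a + b)) - f x)) p <= powR 2 p / 2 * (D a + D b).
Proof.
apply: (@le_trans _ _ (\sum_(x : pt m n) powR 2 p / 2 * (powR (nrm (f (x + a + b) - f (x + a))) p + powR (nrm (f (x+a) - f x)) p))).
  apply: ler_sum => x _.
  apply: le_trans (two_pt p1 (nrm_ge0 _) (nrm_ge0 _)).
  apply: powR_mono; [exact: ltW p0|exact: nrm_ge0|].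
  rewrite addrA.
  have -> : f (x + a + b) - f x = (f (x+a+b) - f (x+a)) + (f (x+a) - f x) by rewrite addrA subrK.
  exact: nrmD.
rewrite -mulr_sumr big_split /= /D [X in _ <= _ * (_ + X)](reindex_inj (addIr a)) /= addrC.
exact: lexx.
Qed.

Lemma card_signs : #|{: signs n}| = expn 2 n.
Proof. by rewrite card_ffun card_bool card_ord. Qed.

Definition Nc : R := #|{: signs n}|%:R.
Lemma NcE : (2 : R) ^+ n = Nc.
Proof. by rewrite /Nc card_signs natrX. Qed.
Lemma Nc_gt0 : 0 < Nc.
Proof. by rewrite /Nc card_signs ltr0n expn_gt0. Qed.

Lemma TjE j x : Tj j f x = Nc^-1 *: \sum_(e : signs n) f (x + epsv_but m j e).
Proof. by rewrite /Tj RpowE R2E NcE. Qed.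

Lemma part1 j : \sum_x powR (nrm (f x - Tj j f x)) p <=
   powR 2 p / Nc * \sum_(e : signs n) D (epsv m 1 e).
Proof.
have Nc0 : Nc != 0 by rewrite gt_eqF // Nc_gt0.
have step x : powR (nrm (f x - Tj j f x)) p <=
   Nc^-1 * \sum_(e : signs n) powR (nrm (f (x + epsv_but m j e) - f x)) p.
  have -> : f x - Tj j f x = Nc^-1 *: \sum_(e : signs n) (f x - f (x + epsv_but m j e)).
    by rewrite TjE sumrB scalerBr sumr_const -scaler_nat scalerA mulVf // scale1r.
  rewrite nrmZ ger0_norm; last by rewrite invr_ge0 ltW ?Nc_gt0.
  have hS : Nc^-1 * nrm (\sum_(e : signs n) (f x - f (x + epsv_but m j e))) <=
      Nc^-1 * \sum_(e : signs n) nrm (f x - f (x + epsv_but m j e)).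
    apply: ler_wpM2l; first by rewrite invr_ge0 ltW ?Nc_gt0.
    exact: nrm_sum.
  have hn : 0 <= Nc^-1 * nrm (\sum_(e : signs n) (f x - f (x + epsv_but m j e))).
    by apply: mulr_ge0; [rewrite invr_ge0 ltW ?Nc_gt0| exact: nrm_ge0].
  apply: le_trans (powR_mono (ltW p0) hn hS) _.
  have hJ := @jensen_fin p p1 _ (fun e : signs n => nrm (f x - f (x + epsv_but m j e)))
     (fun e => nrm_ge0 _) ltac:(by rewrite card_signs expn_gt0).
  apply: le_trans hJ _.
  rewrite -/Nc; apply: ler_wpM2l; first by rewrite invr_ge0 ltW ?Nc_gt0.
  by apply: ler_sum => e _; rewrite nrmB.
apply: le_trans (ler_sum _ (fun x _ => step x)) _.
rewrite -mulr_sumr exchange_big /=.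
apply: (@le_trans _ _ (Nc^-1 * \sum_(e : signs n) (powR 2 p / 2 * (D (epsv m 1 (setj e j true)) + D (epsv m 1 (setj e j false)))))).
  apply: ler_wpM2l; first by rewrite invr_ge0 ltW ?Nc_gt0.
  by apply: ler_sum => e _; rewrite P1; exact: L2.
rewrite -mulr_sumr (sum_set j (fun e => D (epsv m 1 e))) -mulr_natr.
rewrite le_eqVlt; apply/orP; left; apply/eqP; field.
by rewrite Nc0.
Qed.

Lemma rpowN (v : X) : rpow (nrm v) p = powR (nrm v) p.
Proof. exact: rpowE (nrm_ge0 _) p0. Qed.

Lemma part2a (K : R) (K1 : 1 <= K) (HK : Kconv_const X p K) (x : pt m n) :
  \sum_(e : signs n) powR (nrm (\sum_j sgnR (e j) *:
      (Tj j f (ptadd x (two_e m j)) - Tj j f (ptsub x (two_e m j))))) p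
  <= powR (2 * K) p * \sum_(e : signs n) powR (nrm (f (ptadd x (epsv m 2 e)) - f x)) p.
Proof.
pose h := fun d : signs n => 2 *: (f (x + epsv m 2 d) - f x).
have eh j : \sum_(d : signs n) sgnR (d j) *: h d =
    (\sum_(d : signs n) sgnR (d j) *: f (x + epsv m 2 d)) *+ 2.
  rewrite /h; under eq_bigr => d _ do rewrite scaler_nat -scalerMnr scalerBr.
  by rewrite sumrMnl sumrB sgn_sum0 subr0.
have C j : Tj j f (ptadd x (two_e m j)) - Tj j f (ptsub x (two_e m j)) =
    Nc^-1 *: \sum_(d : signs n) sgnR (d j) *: h d.
  rewrite !TjE -scalerBr -sumrB eh.
  under eq_bigr => e _ do rewrite P2 P3.
  by rewrite (sum_set_sub j (fun e => f (x + epsv m 2 e))).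
have eR (e : signs n) : \sum_j sgnR (e j) *:
      (Tj j f (ptadd x (two_e m j)) - Tj j f (ptsub x (two_e m j))) = Rad h e.
  rewrite /Rad RpowE R2E NcE; apply: eq_bigr => j _; by rewrite C.
have K0 : 0 < K by exact: lt_le_trans K1.
have := HK n h; move/RleP; rewrite !rsumE.
under eq_bigr => e _ do rewrite rpowN.
under [X in _ <= _ * X]eq_bigr => e _ do rewrite rpowN.
rewrite (rpowE (ltW K0) p0) => H.
under eq_bigr => e _ do rewrite eR.
apply: le_trans H _.
rewrite powRM ?(ltW K0) // mulrC -mulrA [X in _ <= X]mulrCA [X in X <= _]mulrC; apply: ler_wpM2l; first exact: powR_ge0.
rewrite mulr_sumr; apply: ler_sum => e _.
rewrite /h nrmZ ger0_norm // powRM //; last exact: nrm_ge0.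
Qed.

Lemma part2b (K : R) (K1 : 1 <= K) :
  \sum_(x : pt m n) powR (2 * K) p * \sum_(e : signs n) powR (nrm (f (ptadd x (epsv m 2 e)) - f x)) p
  <= \sum_(x : pt m n) powR (4 * K) p * \sum_(e : signs n) powR (nrm (f (ptadd x (epsv m 1 e)) - f x)) p.
Proof.
have K0 : 0 < K by exact: lt_le_trans K1.
have -> : 4 * K = 2 * (2 * K) by ring.
have K2 : 0 <= 2 * K by rewrite mulr_ge0 // ltW.
rewrite -!mulr_sumr exchange_big [X in _ <= _ * X]exchange_big /=.
rewrite [X in _ <= X * _](@powRM _ 2 (2 * K) p) // (mulrC (2 `^ p)) -mulrA.
apply: ler_wpM2l; first exact: powR_ge0.
rewrite mulr_sumr; apply: ler_sum => e _.
rewrite /ptadd P4; apply: le_trans (L2 _ _) _.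
rewrite le_eqVlt; apply/orP; left; apply/eqP; rewrite /D; by field.
Qed.
End Main.
Unset Implicit Arguments.

Theorem mainTheorem15 (X : BanachSpace) (p : R) (m n : nat)
  (hp : Rle 1 p) (hm : (0 < m)%nat) (f : pt m n -> X) :
  (* first inequality *)
  (forall j : 'I_n,
    Rle (rsum (fun x : pt m n => rpow (bs_norm (bs_sub (f x) (Tj j f x))) p))
        (Rmult (Rdiv (rpow 2 p) (pow 2 n))
           (rsum (fun e : signs n => rsum (fun x : pt m n =>
              rpow (bs_norm (bs_sub (f (ptadd x (epsv m 1 e))) (f x))) p)))))
  /\
  (* second chain, for every admissible K-convexity constant K (in particular K = K_p(X)) *)
  (forall K : R, Rle 1 K -> Kconv_const X p K ->
    (forall x : pt m n,
      Rle (rsum (fun e : signs n => rpow (bs_norm (xsum (fun j : 'I_n =>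
              bs_scal (sgnR (e j))
                (bs_sub (Tj j f (ptadd x (two_e m j))) (Tj j f (ptsub x (two_e m j))))))) p))
          (Rmult (rpow (Rmult 2 K) p)
             (rsum (fun e : signs n => rpow (bs_norm (bs_sub (f (ptadd x (epsv m 2 e))) (f x))) p))))
    /\
    Rle (rsum (fun x : pt m n => Rmult (rpow (Rmult 2 K) p)
             (rsum (fun e : signs n => rpow (bs_norm (bs_sub (f (ptadd x (epsv m 2 e))) (f x))) p))))
        (rsum (fun x : pt m n => Rmult (rpow (Rmult 4 K) p)
             (rsum (fun e : signs n => rpow (bs_norm (bs_sub (f (ptadd x (epsv m 1 e))) (f x))) p))))).

Proof.
have p1 : 1 <= p by apply/RleP.
have p0 : 0 < p by exact: lt_le_trans p1.
have two0 : (0 : R) <= 2 by [].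
split.
  move=> j; apply/RleP.
  rewrite !rsumE.
  under eq_bigr do rewrite (rpowN p1).
  under [X in _ <= _ * X]eq_bigr => e _ do (rewrite rsumE; under eq_bigr do rewrite (rpowN p1)).
  rewrite R2E (rpowE two0 p0) RpowE NcE.
  exact: part1.
move=> K K1 HK; have K1' : 1 <= K by apply/RleP.
have K0 : 0 <= K by exact: le_trans K1'.
split.
  move=> x; apply/RleP; rewrite !rsumE.
  under eq_bigr do rewrite (rpowN p1).
  under [X in _ <= _ * X]eq_bigr do rewrite (rpowN p1).
  rewrite R2E (rpowE _ p0); last by rewrite mulr_ge0.
  exact: part2a.
apply/RleP; rewrite !rsumE.
under eq_bigr => x _ do (rewrite rsumE; under eq_bigr do rewrite (rpowN p1)).
under [X in _ <= X]eq_bigr => x _ do (rewrite rsumE; under eq_bigr do rewrite (rpowN p1)).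
rewrite R2E R4E !(rpowE _ p0) ?mulr_ge0 //.
exact: part2b.
Qed.
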